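(* Let $n \ge 1$ and $1 \le m \le n$ be integers, and put $s_k = 8(n-k)$ and $M_k = 2^{k-1}(8n+16) - 16$ for $k \ge 1$. Consider Boolean variables $x_{(k,i)} \in \{0,1\}$ for $k \in \{1,\dots,m\}$ and $i \in \{1,2,3,4,5,6,A,B\}$ ($8m$ variables), and write an assignment as a bit string listing the variables in the order $(m,1),\dots,(m,6),(m,A),(m,B),(m-1,1),\dots,(m-1,B),\dots,(1,1),\dots,(1,B)$. For each $k$ define (writing $x_i$ for $x_{(k,i)}$) $$\begin{aligned} g_k(x) ={}& -(2M_k+13)x_1 - (M_k+5)x_2 - (M_k+3)x_3 - (M_k+s_k+7)x_4 - x_5 - (M_k+1)x_6 - (s_k+5)x_A - (s_k+3)x_B \\ &+ (M_k+6)x_1x_2 + (M_k+4)x_2x_3 + (M_k+2)x_3x_6 + (M_k+6)x_1x_4 + (M_k+4)x_4x_5 - (M_k+2)x_5x_6 \\ &+ (s_k+4)x_Ax_B - 2x_1x_B + (s_k+4)x_2x_B + (s_k+2)x_4x_A + (s_k+2)x_4x_B \\ &- (s_k+4)x_2x_Ax_B - (s_k+2)x_4x_Ax_B, \end{aligned}$$ and for $P \in \{0,1\}$ define the fitness function $$f^{P}(x) = \sum_{k=1}^{m} g_k(x) + \sum_{k=2}^{m} M_k\, x_{(k,6)}x_{(k-1,1)} + \sum_{k=1}^{m-1} s_k\, x_{(k,B)}x_{(k+1,A)} + 8n\, x_{(1,6)}x_{(1,A)} + P\,(2M_m+16)\,x_{(m,1)}.$$ Let $a = 0^{8m}$ and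 $b = 111110\,01\,0^{8(m-1)}$. Then: (1) in the fitness landscape of $f^{1}$ there is exactly one ascent starting from $a$, and it ends at the local peak $b$; (2) in the fitness landscape of $f^{0}$ there is exactly one ascent starting from $b$, and it ends at the local peak $a$. Both ascents have length $T_m = 10(2^m - 1)$.
   Context: Two assignments in $\{0,1\}^{8m}$ are adjacent if they differ in exactly one variable. For a fitness function $f$, an assignment $x^*$ is a local peak if $f(y) \le f(x^* )$ for every assignment $y$ adjacent to $x^*$. An ascent from $x^0$ is a sequence $x^0, x^1, \dots, x^T$ of assignments such that $x^{t}$ and $x^{t+1}$ are adjacent and $f(x^{t+1}) > f(x^t)$ for each $t$, and $x^T$ is a local peak; its length is $T$. The fitness landscape of $f$ is $f$ together with this adjacency structure. *)

(* Defs.v *)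
From mathcomp Require Import all_boot all_order all_algebra.
Set Implicit Arguments. Unset Strict Implicit. Unset Printing Implicit Defensive.
Import Order.TTheory GRing.Theory Num.Theory.
Local Open Scope ring_scope.

(* Variables x_(k,i), k in {1..m}, i in {1,..,6,A,B}, encoded as
   (k-1, i-1) : 'I_m * 'I_8 with A = 7th, B = 8th position. *)
Definition asg (m : nat) := {ffun 'I_m * 'I_8 -> bool}.

Definition adjacent m (x y : asg m) : bool := #|[set v | x v != y v]| == 1%N.

Definition local_peak m (f : asg m -> int) (x : asg m) : Prop :=
  forall y, adjacent x y -> f y <= f x.

(* An ascent x^0, x^1, ..., x^T is represented by its start x0 and the list
   p = [:: x^1; ...; x^T]; its length is size p. *)
Definition ascent_step m (f : asg m -> int) (x y : asg m) : bool :=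
  adjacent x y && (f x < f y).

Definition ascent m (f : asg m -> int) (x0 : asg m) (p : seq (asg m)) : Prop :=
  path (ascent_step f) x0 p /\ local_peak f (last x0 p).

(* Value of x_(k,i) as an integer, with k in 1..m and i in 1..8
   (i = 7 is A, i = 8 is B). Out-of-range indices give 0 (never used). *)
Definition X m (x : asg m) (k i : nat) : int :=
  match @insub nat (fun j => j < m)%N _ k.-1, @insub nat (fun j => j < 8)%N _ i.-1 with
  | Some k', Some i' => ((x (k', i') : nat) : int)
  | _, _ => 0
  end.

Definition iA := 7%N.
Definition iB := 8%N.

Definition sk (n k : nat) : int := 8 * (n%:Z - k%:Z).
Definition Mk (n k : nat) : int := (2 ^ k.-1)%:Z * (8 * n + 16)%:Z - 16.

Definition g (n m : nat) (k : nat) (x : asg m) : int :=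
  let M := Mk n k in let s := sk n k in
  let x1 := X x k 1 in let x2 := X x k 2 in let x3 := X x k 3 in
  let x4 := X x k 4 in let x5 := X x k 5 in let x6 := X x k 6 in
  let xA := X x k iA in let xB := X x k iB in
    - (2 * M + 13) * x1 - (M + 5) * x2 - (M + 3) * x3 - (M + s + 7) * x4
    - x5 - (M + 1) * x6 - (s + 5) * xA - (s + 3) * xB
    + (M + 6) * x1 * x2 + (M + 4) * x2 * x3 + (M + 2) * x3 * x6
    + (M + 6) * x1 * x4 + (M + 4) * x4 * x5 - (M + 2) * x5 * x6
    + (s + 4) * xA * xB - 2 * x1 * xB + (s + 4) * x2 * xB
    + (s + 2) * x4 * xA + (s + 2) * x4 * xB
    - (s + 4) * x2 * xA * xB - (s + 2) * x4 * xA * xB.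

Definition fit (n m : nat) (P : bool) (x : asg m) : int :=
  \sum_(1 <= k < m.+1) g n k x
  + \sum_(2 <= k < m.+1) Mk n k * X x k 6 * X x k.-1 1
  + \sum_(1 <= k < m) sk n k * X x k iB * X x k.+1 iA
  + (8 * n)%:Z * X x 1 6 * X x 1 iA
  + (P : nat)%:Z * (2 * Mk n m + 16) * X x m 1.

Definition asg_a (m : nat) : asg m := [ffun _ => false].

(* b = 111110 01 0^{8(m-1)}: in block k = m, x1..x5 = 1, x6 = 0, xA = 0, xB = 1;
   all other variables 0. *)
Definition asg_b (m : nat) : asg m :=
  [ffun v => (val v.1 == m.-1) && (val v.2 \in [:: 0; 1; 2; 3; 4; 7]%N)].

(* Main.v *)
Require Import Defs.
From mathcomp Require Import all_boot all_order all_algebra.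
From mathcomp Require Import zify ring lra.
Set Implicit Arguments. Unset Strict Implicit. Unset Printing Implicit Defensive.
Import Order.TTheory GRing.Theory Num.Theory.
Local Open Scope ring_scope.
Definition Gf (M s : int) (b : nat -> int) : int :=
  let x1 := b 0%N in let x2 := b 1%N in let x3 := b 2%N in
  let x4 := b 3%N in let x5 := b 4%N in let x6 := b 5%N in
  let xA := b 6%N in let xB := b 7%N in
    - (2 * M + 13) * x1 - (M + 5) * x2 - (M + 3) * x3 - (M + s + 7) * x4
    - x5 - (M + 1) * x6 - (s + 5) * xA - (s + 3) * xB
    + (M + 6) * x1 * x2 + (M + 4) * x2 * x3 + (M + 2) * x3 * x6
    + (M + 6) * x1 * x4 + (M + 4) * x4 * x5 - (M + 2) * x5 * x6
    + (s + 4) * xA * xB - 2 * x1 * xB + (s + 4) * x2 * xB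
    + (s + 2) * x4 * xA + (s + 2) * x4 * xB
    - (s + 4) * x2 * xA * xB - (s + 2) * x4 * xA * xB.

Lemma g_Gf n m k (x : asg m) : g n k x = Gf (Mk n k) (sk n k) (fun i => X x k i.+1).
Proof. by []. Qed.

Lemma Gf_ext M s b b' : (forall i, (i < 8)%N -> b i = b' i) -> Gf M s b = Gf M s b'.
Proof. by move=> h; rewrite /Gf !h. Qed.

Definition upd (b : nat -> int) (i : nat) : nat -> int :=
  fun j => if j == i then 1 - b j else b j.

Definition coup (first : bool) (M s : int) (b : nat -> int) (p6 pA c1 cB : int) (i : nat) : int :=
  match i with
  | 0%N => (2 * M + 16) * p6
  | 5%N => if first then (s + 8) * b 6%N else M * c1
  | 6%N => (s + 8) * (if first then b 5%N else cB)
  | 7%N => s * pA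
  | _ => 0
  end.

Definition Dloc first M s b p6 pA c1 cB i : int :=
  Gf M s (upd b i) - Gf M s b + (1 - 2 * b i) * coup first M s b p6 pA c1 cB i.

Definition xbb m (x : asg m) (k i : nat) : bool :=
  match @insub nat (fun j => j < m)%N _ k, @insub nat (fun j => j < 8)%N _ i with
  | Some k', Some i' => x (k', i')
  | _, _ => false
  end.

Lemma X_xbb m (x : asg m) k i : X x k.+1 i.+1 = (xbb x k i : nat)%:Z.
Proof. by rewrite /X /xbb /=; case: insub => // a; case: insub. Qed.

Definition flipn m (x : asg m) (p : nat * nat) : asg m :=
  [ffun w : 'I_m * 'I_8 => if ((w.1 : nat) == p.1) && ((w.2 : nat) == p.2) then ~~ x w else x w].

Lemma xbb_flipn m (x : asg m) p k i : (p.1 < m)%N -> (p.2 < 8)%N ->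
  xbb (flipn x p) k i = if (k == p.1) && (i == p.2) then ~~ xbb x k i else xbb x k i.
Proof.
move=> h1 h2; rewrite /xbb; case: (insubP 'I_m k) => [k' hk ek|hk]; case: (insubP 'I_8 i) => [i' hi ei|hi] //=.
- by rewrite ffunE /= ek ei.
- by case: (i =P p.2) => [e|]; [rewrite e h2 in hi|rewrite andbF].
- by case: (k =P p.1) => [e|]; [rewrite e h1 in hk|].
- by case: (k =P p.1) => [e|]; [rewrite e h1 in hk|].
Qed.

Lemma X_pred m (x : asg m) j i : X x j i = X x j.-1.+1 i.-1.+1.
Proof. by []. Qed.

Lemma X_flipn m (x : asg m) p j i : (p.1 < m)%N -> (p.2 < 8)%N ->
  X (flipn x p) j i = if (j.-1 == p.1) && (i.-1 == p.2) then 1 - X x j i else X x j i.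
Proof.
move=> h1 h2; rewrite (X_pred (flipn x p)) (X_pred x).
rewrite !X_xbb xbb_flipn //; case: ifP => // _; by case: xbb.
Qed.

Ltac crush := repeat (case: ifP => ?); try (by ring); try lia.

Lemma X01 m (x : asg m) k i : X x k i = 0 \/ X x k i = 1.
Proof. rewrite /X; case: insub => [a|]; last by left. case: insub => [b|]; last by left. by case: (x (a, b)); [right|left]. Qed.

Lemma sum_diff a b (F G : nat -> int) c :
  (forall k, (a <= k < b)%N -> k != c -> F k = G k) ->
  \sum_(a <= k < b) F k - \sum_(a <= k < b) G k = if (a <= c < b)%N then F c - G c else 0.
Proof.
elim: b => [|b IH] h.
  by rewrite !big_geq // ltn0 andbF subrr.
case: (leqP a b) => hab; last first.
  rewrite !big_geq //.
  by rewrite subrr; case: ifP => //; lia.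
rewrite !big_nat_recr //= opprD addrACA IH; last by move=> k /andP [h1 h2] hk; apply: h => //; lia.
case: (eqVneq b c) => [<-|hbc].
  by rewrite ltnn andbF add0r hab ltnSn.
rewrite (h b) ?hbc //; last by rewrite hab ltnSn.
by rewrite subrr addr0 ltnS (leq_eqVlt c) (eq_sym c) (negbTE hbc).
Qed.

Lemma X_out m (x : asg m) k i : (m <= k)%N -> X x k.+1 i = 0.
Proof. move=> h; rewrite /X /=; by rewrite insubN // -leqNgt. Qed.

Lemma MkS n k : Mk n k.+2 = 2 * Mk n k.+1 + 16.
Proof. rewrite /Mk /= expnS PoszM. ring. Qed.

Lemma skS n k : sk n k = sk n k.+1 + 8.
Proof. rewrite /sk -(addn1 k) PoszD. ring. Qed.

Lemma D2 n m (x : asg m) k i : (k < m)%N -> (i < 8)%N ->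
  \sum_(2 <= j < m.+1) Mk n j * X (flipn x (k, i)) j 6 * X (flipn x (k, i)) j.-1 1 - \sum_(2 <= j < m.+1) Mk n j * X x j 6 * X x j.-1 1 =
   (if (i == 5)%N && (0 < k)%N then Mk n k.+1 * (1 - 2 * X x k.+1 6) * X x k 1 else 0)
   + (if (i == 0)%N && (k.+1 < m)%N then Mk n k.+2 * X x k.+2 6 * (1 - 2 * X x k.+1 1) else 0).
Proof.
move=> hk hi.
have XF := fun j i' => @X_flipn m x (k, i) j i' hk hi.
rewrite /= in XF.
rewrite (sum_diff (c := if i == 5%N then k.+1 else if i == 0%N then k.+2 else 0%N));
  move: hi XF; case: i => [|[|[|[|[|[|[|[|i]]]]]]]] //= _ XF;
  first [by move=> j hj hjc; rewrite !XF; crush | rewrite !XF; crush].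
Qed.

Lemma D3 n m (x : asg m) k i : (k < m)%N -> (i < 8)%N ->
  \sum_(1 <= j < m) sk n j * X (flipn x (k, i)) j iB * X (flipn x (k, i)) j.+1 iA - \sum_(1 <= j < m) sk n j * X x j iB * X x j.+1 iA =
   (if (i == 7)%N && (k.+1 < m)%N then sk n k.+1 * (1 - 2 * X x k.+1 8) * X x k.+2 7 else 0)
   + (if (i == 6)%N && (0 < k)%N then sk n k * X x k 8 * (1 - 2 * X x k.+1 7) else 0).
Proof.
move=> hk hi.
have XF := fun j i' => @X_flipn m x (k, i) j i' hk hi.
rewrite /= /iA /iB in XF *.
rewrite (sum_diff (c := if i == 7%N then k.+1 else if i == 6%N then k else 0%N));
  move: hi XF; case: i => [|[|[|[|[|[|[|[|i]]]]]]]] //= _ XF;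
  first [by move=> j hj hjc; rewrite !XF; crush | rewrite !XF; crush].
Qed.

Lemma D4 n m (x : asg m) k i : (k < m)%N -> (i < 8)%N ->
  (8 * n)%N%:Z * X (flipn x (k, i)) 1 6 * X (flipn x (k, i)) 1 iA - (8 * n)%N%:Z * X x 1 6 * X x 1 iA =
   (if (k == 0)%N && (i == 5)%N then (8 * n)%N%:Z * (1 - 2 * X x 1 6) * X x 1 7 else 0)
   + (if (k == 0)%N && (i == 6)%N then (8 * n)%N%:Z * X x 1 6 * (1 - 2 * X x 1 7) else 0).
Proof.
move=> hk hi.
have XF := fun j i' => @X_flipn m x (k, i) j i' hk hi.
rewrite /= /iA /iB in XF *.
move: hi XF; case: i => [|[|[|[|[|[|[|[|i]]]]]]]] //= _ XF; rewrite !XF; crush.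
Qed.

Lemma D5 n m (P : bool) (x : asg m) k i : (k < m)%N -> (i < 8)%N ->
  (nat_of_bool P)%:Z * (2 * Mk n m + 16) * X (flipn x (k, i)) m 1 - (nat_of_bool P)%:Z * (2 * Mk n m + 16) * X x m 1 =
   if (k.+1 == m)%N && (i == 0)%N then (nat_of_bool P)%:Z * (2 * Mk n m + 16) * (1 - 2 * X x m 1) else 0.
Proof.
move=> hk hi.
have XF := fun j i' => @X_flipn m x (k, i) j i' hk hi.
rewrite /= in XF.
move: hi XF; case: i => [|[|[|[|[|[|[|[|i]]]]]]]] //= _ XF; rewrite !XF; crush.
Qed.

Lemma D1 n m (x : asg m) k i : (k < m)%N -> (i < 8)%N ->
  \sum_(1 <= j < m.+1) g n j (flipn x (k, i)) - \sum_(1 <= j < m.+1) g n j x =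
   Gf (Mk n k.+1) (sk n k.+1) (upd (fun j => X x k.+1 j.+1) i) - Gf (Mk n k.+1) (sk n k.+1) (fun j => X x k.+1 j.+1).
Proof.
move=> hk hi.
have XF := fun j i' => @X_flipn m x (k, i) j i' hk hi.
rewrite /= in XF.
rewrite (sum_diff (c := k.+1)).
  case: ifP => h; last by lia.
  rewrite !g_Gf; congr (_ - _); apply: Gf_ext => i' hi'.
  by rewrite XF /upd /= eqxx.
move=> j hj hjk; rewrite !g_Gf; apply: Gf_ext => i' _; rewrite XF; crush.
Qed.

Lemma s8 n : ((8 * n)%N : int) = sk n 1 + 8.
Proof. rewrite /sk; lia. Qed.

Lemma fit_flip n m (P : bool) (x : asg m) k i : (k < m)%N -> (i < 8)%N ->
  fit n P (flipn x (k, i)) - fit n P x =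
  Dloc (k == 0)%N (Mk n k.+1) (sk n k.+1) (fun j => X x k.+1 j.+1)
       (X x k.+2 6 + (nat_of_bool (k.+1 == m)%N)%:Z * (nat_of_bool P)%:Z) (X x k.+2 iA) (X x k 1) (X x k iB) i.
Proof.
move=> hk hi.
rewrite /fit.
rewrite (_ : forall a1 a2 a3 a4 a5 b1 b2 b3 b4 b5 : int, (a1 + a2 + a3 + a4 + a5) - (b1 + b2 + b3 + b4 + b5) = (a1 - b1) + (a2 - b2) + (a3 - b3) + (a4 - b4) + (a5 - b5)); last by move=> *; ring.
rewrite D1 // D2 // D3 // D4 // D5 //.
rewrite /Dloc /coup /iA /iB (MkS n k) (skS n k).
case: k hk hi => [|k] hk hi.
  rewrite s8.
  case: (ltngtP 1 m) => hkm; [ | by lia | (rewrite (@X_out m x 1 6); last by lia); (rewrite (@X_out m x 1 7); last by lia)];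
   [ | rewrite (_ : Mk n m = Mk n 1); [rewrite (_ : X x m 1 = X x 1 1); last by rewrite -[Y in X x Y 1]hkm | by rewrite -hkm] ];
  move: hi; case: i => [|[|[|[|[|[|[|[|i]]]]]]]] //= _; crush.
case: (ltngtP k.+2 m) => hkm; [ | by lia | (rewrite (@X_out m x k.+2 6); last by lia); (rewrite (@X_out m x k.+2 7); last by lia)];
   [ | rewrite (_ : Mk n m = Mk n k.+2); [rewrite (_ : X x m 1 = X x k.+2 1); last by rewrite -[Y in X x Y 1]hkm | by rewrite -hkm] ];
  move: hi; case: i => [|[|[|[|[|[|[|[|i]]]]]]]] //= _; crush.
Qed.

Definition st (l : seq nat) : nat -> int := fun i => (nth 0%N l i)%:Z.

Lemma Dloc_aff first b p6 pA c1 cB i M s :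
  Dloc first M s b p6 pA c1 cB i =
  Dloc first 0 0 b p6 pA c1 cB i
  + M * (Dloc first 1 0 b p6 pA c1 cB i - Dloc first 0 0 b p6 pA c1 cB i)
  + s * (Dloc first 0 1 b p6 pA c1 cB i - Dloc first 0 0 b p6 pA c1 cB i).
Proof.
rewrite /Dloc /coup /Gf /upd.
case: first; case: i => [|[|[|[|[|[|[|[|i]]]]]]]] /=; ring.
Qed.

Definition pos_reg (first : bool) (a b c : int) : bool :=
  if first then (0 < c + 8 * a) && (0 <= a + b) else [&& 0 < c + 8 * a, 0 <= a & 0 <= a + b].
Definition npos_reg (first : bool) (a b c : int) : bool :=
  if first then (c + 8 * a <= 0) && (a + b <= 0) else [&& c + 8 * a <= 0, a <= 0 & a + b <= 0].

Definition okb first S p6 pA c1 cB (tgt : nat) : bool :=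
  all (fun i =>
    let c := Dloc first 0 0 (st S) p6 pA c1 cB i in
    let a := Dloc first 1 0 (st S) p6 pA c1 cB i - c in
    let b := Dloc first 0 1 (st S) p6 pA c1 cB i - c in
    if i == tgt then pos_reg first a b c else npos_reg first a b c) (iota 0 8).

Definition nob first S p6 pA c1 cB : bool :=
  all (fun i =>
    let c := Dloc first 0 0 (st S) p6 pA c1 cB i in
    let a := Dloc first 1 0 (st S) p6 pA c1 cB i - c in
    let b := Dloc first 0 1 (st S) p6 pA c1 cB i - c in
    npos_reg first a b c) (iota 0 8).

Lemma pos_reg_sound first a b c M s : pos_reg first a b c -> 0 <= s -> s + 8 <= M -> (first -> M = s + 8) ->
  0 < c + M * a + s * b.
Proof.
case: first => /= h h1 h2 h3.
  rewrite (h3 erefl); case/andP: h => ha hb. nia.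
case/and3P: h => ha hb hc. nia.
Qed.

Lemma npos_reg_sound first a b c M s : npos_reg first a b c -> 0 <= s -> s + 8 <= M -> (first -> M = s + 8) ->
  c + M * a + s * b <= 0.
Proof.
case: first => /= h h1 h2 h3.
  rewrite (h3 erefl); case/andP: h => ha hb. nia.
case/and3P: h => ha hb hc. nia.
Qed.

Lemma okb_sound first S p6 pA c1 cB tgt M s : okb first S p6 pA c1 cB tgt ->
  0 <= s -> s + 8 <= M -> (first -> M = s + 8) ->
  forall i, (i < 8)%N -> (0 < Dloc first M s (st S) p6 pA c1 cB i) = (i == tgt).
Proof.
move=> /allP h h1 h2 h3 i hi.
have := h i; rewrite mem_iota add0n hi => /(_ isT) /=.
rewrite (Dloc_aff first (st S) p6 pA c1 cB i M s).
case: (i == tgt) => H.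
  by apply: pos_reg_sound H h1 h2 h3.
by apply/negbTE; rewrite -leNgt; apply: npos_reg_sound H h1 h2 h3.
Qed.

Lemma nob_sound first S p6 pA c1 cB M s : nob first S p6 pA c1 cB ->
  0 <= s -> s + 8 <= M -> (first -> M = s + 8) ->
  forall i, (i < 8)%N -> Dloc first M s (st S) p6 pA c1 cB i <= 0.
Proof.
move=> /allP h h1 h2 h3 i hi.
have := h i; rewrite mem_iota add0n hi => /(_ isT) /=.
rewrite (Dloc_aff first (st S) p6 pA c1 cB i M s) => H.
by apply: npos_reg_sound H h1 h2 h3.
Qed.

Lemma LU0 (first : bool) (M s pA c1 cB : int) : 0 <= s -> s + 8 <= M -> (first -> M = s + 8) ->
  pA = 0 -> (~~ first -> c1 = 0 /\ cB = 0) ->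
  forall i, (i < 8)%N -> (0 < Dloc first M s (st [:: 0; 0; 0; 0; 0; 0; 0; 0]%N) 1 pA c1 cB i) = (i == 0)%N.
Proof.
move=> h1 h2 h3 hpA h4; case: first h3 h4 => h3 h4; [|case: (h4 erefl) => -> ->];
  subst pA; apply: okb_sound => //; vm_compute; reflexivity.
Qed.

Lemma LU1 (first : bool) (M s pA c1 cB : int) : 0 <= s -> s + 8 <= M -> (first -> M = s + 8) ->
  pA = 0 -> (~~ first -> c1 = 0 /\ cB = 0) ->
  forall i, (i < 8)%N -> (0 < Dloc first M s (st [:: 1; 0; 0; 0; 0; 0; 0; 0]%N) 1 pA c1 cB i) = (i == 1)%N.
Proof.
move=> h1 h2 h3 hpA h4; case: first h3 h4 => h3 h4; [|case: (h4 erefl) => -> ->];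
  subst pA; apply: okb_sound => //; vm_compute; reflexivity.
Qed.

Lemma LU2 (first : bool) (M s pA c1 cB : int) : 0 <= s -> s + 8 <= M -> (first -> M = s + 8) ->
  pA = 0 -> (~~ first -> c1 = 0 /\ cB = 0) ->
  forall i, (i < 8)%N -> (0 < Dloc first M s (st [:: 1; 1; 0; 0; 0; 0; 0; 0]%N) 1 pA c1 cB i) = (i == 2)%N.
Proof.
move=> h1 h2 h3 hpA h4; case: first h3 h4 => h3 h4; [|case: (h4 erefl) => -> ->];
  subst pA; apply: okb_sound => //; vm_compute; reflexivity.
Qed.

Lemma LU3 (first : bool) (M s pA c1 cB : int) : 0 <= s -> s + 8 <= M -> (first -> M = s + 8) ->
  pA = 0 -> (~~ first -> c1 = 0 /\ cB = 0) ->
  forall i, (i < 8)%N -> (0 < Dloc first M s (st [:: 1; 1; 1; 0; 0; 0; 0; 0]%N) 1 pA c1 cB i) = (i == 5)%N.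
Proof.
move=> h1 h2 h3 hpA h4; case: first h3 h4 => h3 h4; [|case: (h4 erefl) => -> ->];
  subst pA; apply: okb_sound => //; vm_compute; reflexivity.
Qed.

Lemma LU4 (first : bool) (M s pA c1 cB : int) : 0 <= s -> s + 8 <= M -> (first -> M = s + 8) ->
  pA = 0 -> (~~ first -> c1 = 1 /\ cB = 1) ->
  forall i, (i < 8)%N -> (0 < Dloc first M s (st [:: 1; 1; 1; 0; 0; 1; 0; 0]%N) 1 pA c1 cB i) = (i == 6)%N.
Proof.
move=> h1 h2 h3 hpA h4; case: first h3 h4 => h3 h4; [|case: (h4 erefl) => -> ->];
  subst pA; apply: okb_sound => //; vm_compute; reflexivity.
Qed.

Lemma LU5 (first : bool) (M s pA c1 cB : int) : 0 <= s -> s + 8 <= M -> (first -> M = s + 8) ->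
  pA = 0 -> (~~ first -> c1 = 1 /\ cB = 1) ->
  forall i, (i < 8)%N -> (0 < Dloc first M s (st [:: 1; 1; 1; 0; 0; 1; 1; 0]%N) 1 pA c1 cB i) = (i == 3)%N.
Proof.
move=> h1 h2 h3 hpA h4; case: first h3 h4 => h3 h4; [|case: (h4 erefl) => -> ->];
  subst pA; apply: okb_sound => //; vm_compute; reflexivity.
Qed.

Lemma LU6 (first : bool) (M s pA c1 cB : int) : 0 <= s -> s + 8 <= M -> (first -> M = s + 8) ->
  pA = 0 -> (~~ first -> c1 = 1 /\ cB = 1) ->
  forall i, (i < 8)%N -> (0 < Dloc first M s (st [:: 1; 1; 1; 1; 0; 1; 1; 0]%N) 1 pA c1 cB i) = (i == 4)%N.
Proof.
move=> h1 h2 h3 hpA h4; case: first h3 h4 => h3 h4; [|case: (h4 erefl) => -> ->];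
  subst pA; apply: okb_sound => //; vm_compute; reflexivity.
Qed.

Lemma LU7 (first : bool) (M s pA c1 cB : int) : 0 <= s -> s + 8 <= M -> (first -> M = s + 8) ->
  pA = 0 -> (~~ first -> c1 = 1 /\ cB = 1) ->
  forall i, (i < 8)%N -> (0 < Dloc first M s (st [:: 1; 1; 1; 1; 1; 1; 1; 0]%N) 1 pA c1 cB i) = (i == 5)%N.
Proof.
move=> h1 h2 h3 hpA h4; case: first h3 h4 => h3 h4; [|case: (h4 erefl) => -> ->];
  subst pA; apply: okb_sound => //; vm_compute; reflexivity.
Qed.

Lemma LU8 (first : bool) (M s pA c1 cB : int) : 0 <= s -> s + 8 <= M -> (first -> M = s + 8) ->
  pA = 0 -> (~~ first -> c1 = 0 /\ cB = 0) ->
  forall i, (i < 8)%N -> (0 < Dloc first M s (st [:: 1; 1; 1; 1; 1; 0; 1; 0]%N) 1 pA c1 cB i) = (i == 6)%N.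
Proof.
move=> h1 h2 h3 hpA h4; case: first h3 h4 => h3 h4; [|case: (h4 erefl) => -> ->];
  subst pA; apply: okb_sound => //; vm_compute; reflexivity.
Qed.

Lemma LU9 (first : bool) (M s pA c1 cB : int) : 0 <= s -> s + 8 <= M -> (first -> M = s + 8) ->
  pA = 0 -> (~~ first -> c1 = 0 /\ cB = 0) ->
  forall i, (i < 8)%N -> (0 < Dloc first M s (st [:: 1; 1; 1; 1; 1; 0; 0; 0]%N) 1 pA c1 cB i) = (i == 7)%N.
Proof.
move=> h1 h2 h3 hpA h4; case: first h3 h4 => h3 h4; [|case: (h4 erefl) => -> ->];
  subst pA; apply: okb_sound => //; vm_compute; reflexivity.
Qed.

Lemma LD0 (first : bool) (M s pA c1 cB : int) : 0 <= s -> s + 8 <= M -> (first -> M = s + 8) ->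
  (pA = 0 \/ pA = 1) -> (~~ first -> c1 = 0 /\ cB = 0) ->
  forall i, (i < 8)%N -> (0 < Dloc first M s (st [:: 1; 1; 1; 1; 1; 0; 0; 1]%N) 0 pA c1 cB i) = (i == 0)%N.
Proof.
move=> h1 h2 h3 hpA h4; case: first h3 h4 => h3 h4; [|case: (h4 erefl) => -> ->];
  case: hpA => ->; apply: okb_sound => //; vm_compute; reflexivity.
Qed.

Lemma LD1 (first : bool) (M s pA c1 cB : int) : 0 <= s -> s + 8 <= M -> (first -> M = s + 8) ->
  (pA = 0 \/ pA = 1) -> (~~ first -> c1 = 0 /\ cB = 0) ->
  forall i, (i < 8)%N -> (0 < Dloc first M s (st [:: 0; 1; 1; 1; 1; 0; 0; 1]%N) 0 pA c1 cB i) = (i == 3)%N.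
Proof.
move=> h1 h2 h3 hpA h4; case: first h3 h4 => h3 h4; [|case: (h4 erefl) => -> ->];
  case: hpA => ->; apply: okb_sound => //; vm_compute; reflexivity.
Qed.

Lemma LD2 (first : bool) (M s pA c1 cB : int) : 0 <= s -> s + 8 <= M -> (first -> M = s + 8) ->
  (pA = 0 \/ pA = 1) -> (~~ first -> c1 = 0 /\ cB = 0) ->
  forall i, (i < 8)%N -> (0 < Dloc first M s (st [:: 0; 1; 1; 0; 1; 0; 0; 1]%N) 0 pA c1 cB i) = (i == 4)%N.
Proof.
move=> h1 h2 h3 hpA h4; case: first h3 h4 => h3 h4; [|case: (h4 erefl) => -> ->];
  case: hpA => ->; apply: okb_sound => //; vm_compute; reflexivity.
Qed.

Lemma LD3 (first : bool) (M s pA c1 cB : int) : 0 <= s -> s + 8 <= M -> (first -> M = s + 8) ->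
  (pA = 0 \/ pA = 1) -> (~~ first -> c1 = 0 /\ cB = 0) ->
  forall i, (i < 8)%N -> (0 < Dloc first M s (st [:: 0; 1; 1; 0; 0; 0; 0; 1]%N) 0 pA c1 cB i) = (i == 5)%N.
Proof.
move=> h1 h2 h3 hpA h4; case: first h3 h4 => h3 h4; [|case: (h4 erefl) => -> ->];
  case: hpA => ->; apply: okb_sound => //; vm_compute; reflexivity.
Qed.

Lemma LD4 (first : bool) (M s pA c1 cB : int) : 0 <= s -> s + 8 <= M -> (first -> M = s + 8) ->
  (pA = 0 \/ pA = 1) -> (~~ first -> c1 = 1 /\ cB = 1) ->
  forall i, (i < 8)%N -> (0 < Dloc first M s (st [:: 0; 1; 1; 0; 0; 1; 0; 1]%N) 0 pA c1 cB i) = (i == 6)%N.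
Proof.
move=> h1 h2 h3 hpA h4; case: first h3 h4 => h3 h4; [|case: (h4 erefl) => -> ->];
  case: hpA => ->; apply: okb_sound => //; vm_compute; reflexivity.
Qed.

Lemma LD5 (first : bool) (M s pA c1 cB : int) : 0 <= s -> s + 8 <= M -> (first -> M = s + 8) ->
  (pA = 0 \/ pA = 1) -> (~~ first -> c1 = 1 /\ cB = 1) ->
  forall i, (i < 8)%N -> (0 < Dloc first M s (st [:: 0; 1; 1; 0; 0; 1; 1; 1]%N) 0 pA c1 cB i) = (i == 1)%N.
Proof.
move=> h1 h2 h3 hpA h4; case: first h3 h4 => h3 h4; [|case: (h4 erefl) => -> ->];
  case: hpA => ->; apply: okb_sound => //; vm_compute; reflexivity.
Qed.

Lemma LD6 (first : bool) (M s pA c1 cB : int) : 0 <= s -> s + 8 <= M -> (first -> M = s + 8) ->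
  (pA = 0 \/ pA = 1) -> (~~ first -> c1 = 1 /\ cB = 1) ->
  forall i, (i < 8)%N -> (0 < Dloc first M s (st [:: 0; 0; 1; 0; 0; 1; 1; 1]%N) 0 pA c1 cB i) = (i == 2)%N.
Proof.
move=> h1 h2 h3 hpA h4; case: first h3 h4 => h3 h4; [|case: (h4 erefl) => -> ->];
  case: hpA => ->; apply: okb_sound => //; vm_compute; reflexivity.
Qed.

Lemma LD7 (first : bool) (M s pA c1 cB : int) : 0 <= s -> s + 8 <= M -> (first -> M = s + 8) ->
  (pA = 0 \/ pA = 1) -> (~~ first -> c1 = 1 /\ cB = 1) ->
  forall i, (i < 8)%N -> (0 < Dloc first M s (st [:: 0; 0; 0; 0; 0; 1; 1; 1]%N) 0 pA c1 cB i) = (i == 5)%N.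
Proof.
move=> h1 h2 h3 hpA h4; case: first h3 h4 => h3 h4; [|case: (h4 erefl) => -> ->];
  case: hpA => ->; apply: okb_sound => //; vm_compute; reflexivity.
Qed.

Lemma LD8 (first : bool) (M s pA c1 cB : int) : 0 <= s -> s + 8 <= M -> (first -> M = s + 8) ->
  (pA = 0 \/ pA = 1) -> (~~ first -> c1 = 0 /\ cB = 0) ->
  forall i, (i < 8)%N -> (0 < Dloc first M s (st [:: 0; 0; 0; 0; 0; 0; 1; 1]%N) 0 pA c1 cB i) = (i == 6)%N.
Proof.
move=> h1 h2 h3 hpA h4; case: first h3 h4 => h3 h4; [|case: (h4 erefl) => -> ->];
  case: hpA => ->; apply: okb_sound => //; vm_compute; reflexivity.
Qed.

Lemma LD9 (first : bool) (M s pA c1 cB : int) : 0 <= s -> s + 8 <= M -> (first -> M = s + 8) ->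
  (pA = 0 \/ pA = 1) -> (~~ first -> c1 = 0 /\ cB = 0) ->
  forall i, (i < 8)%N -> (0 < Dloc first M s (st [:: 0; 0; 0; 0; 0; 0; 0; 1]%N) 0 pA c1 cB i) = (i == 7)%N.
Proof.
move=> h1 h2 h3 hpA h4; case: first h3 h4 => h3 h4; [|case: (h4 erefl) => -> ->];
  case: hpA => ->; apply: okb_sound => //; vm_compute; reflexivity.
Qed.

Lemma WU1 (M s pA c1 : int) : 0 <= s -> s + 8 <= M ->
  pA = 0 -> (c1 = 0 \/ c1 = 1) ->
  forall i, (i < 8)%N -> Dloc false M s (st [:: 1; 1; 1; 0; 0; 1; 0; 0]%N) 1 pA c1 0 i <= 0.
Proof.
move=> h1 h2 hpA hc; subst pA; case: hc => ->; apply: nob_sound => //; vm_compute; reflexivity.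
Qed.

Lemma WU2 (M s pA c1 : int) : 0 <= s -> s + 8 <= M ->
  pA = 0 -> (c1 = 0 \/ c1 = 1) ->
  forall i, (i < 8)%N -> Dloc false M s (st [:: 1; 1; 1; 1; 1; 0; 1; 0]%N) 1 pA c1 1 i <= 0.
Proof.
move=> h1 h2 hpA hc; subst pA; case: hc => ->; apply: nob_sound => //; vm_compute; reflexivity.
Qed.

Lemma WD1 (M s pA c1 : int) : 0 <= s -> s + 8 <= M ->
  (pA = 0 \/ pA = 1) -> (c1 = 0 \/ c1 = 1) ->
  forall i, (i < 8)%N -> Dloc false M s (st [:: 0; 1; 1; 0; 0; 1; 0; 1]%N) 0 pA c1 0 i <= 0.
Proof.
move=> h1 h2 hpA hc; case: hpA => ->; case: hc => ->; apply: nob_sound => //; vm_compute; reflexivity.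
Qed.

Lemma WD2 (M s pA c1 : int) : 0 <= s -> s + 8 <= M ->
  (pA = 0 \/ pA = 1) -> (c1 = 0 \/ c1 = 1) ->
  forall i, (i < 8)%N -> Dloc false M s (st [:: 0; 0; 0; 0; 0; 0; 1; 1]%N) 0 pA c1 1 i <= 0.
Proof.
move=> h1 h2 hpA hc; case: hpA => ->; case: hc => ->; apply: nob_sound => //; vm_compute; reflexivity.
Qed.

Lemma RZ (first : bool) (M s pA c1 cB : int) : 0 <= s -> s + 8 <= M -> (first -> M = s + 8) ->
  (pA = 0 \/ pA = 1) -> (~~ first -> c1 = 0 /\ cB = 0) ->
  forall i, (i < 8)%N -> Dloc first M s (st [:: 0; 0; 0; 0; 0; 0; 0; 0]%N) 0 pA c1 cB i <= 0.
Proof.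
move=> h1 h2 h3 hpA h4; case: first h3 h4 => h3 h4; [|case: (h4 erefl) => -> ->];
  case: hpA => ->; apply: nob_sound => //; vm_compute; reflexivity.
Qed.

Lemma RB (first : bool) (M s pA c1 cB : int) : 0 <= s -> s + 8 <= M -> (first -> M = s + 8) ->
  (pA = 0 \/ pA = 1) -> (~~ first -> c1 = 0 /\ cB = 0) ->
  forall i, (i < 8)%N -> Dloc first M s (st [:: 1; 1; 1; 1; 1; 0; 0; 1]%N) 1 pA c1 cB i <= 0.
Proof.
move=> h1 h2 h3 hpA h4; case: first h3 h4 => h3 h4; [|case: (h4 erefl) => -> ->];
  case: hpA => ->; apply: nob_sound => //; vm_compute; reflexivity.
Qed.


Definition impn n m (P : bool) (x : asg m) (p : nat * nat) : bool := fit n P x < fit n P (flipn x p).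
Definition blk m (x : asg m) t S := forall j, (j < 8)%N -> X x t.+1 j.+1 = st S j.
Definition zb m (x : asg m) j := forall k i, (k < j)%N -> (i < 8)%N -> X x k.+1 i.+1 = 0.
Definition bS := [:: 1; 1; 1; 1; 1; 0; 0; 1]%N.
Definition zS := [:: 0; 0; 0; 0; 0; 0; 0; 0]%N.
Definition agree m (x y : asg m) j := forall k i, (j <= k)%N -> X x k.+1 i = X y k.+1 i.
Definition p6 m (P : bool) (x : asg m) k : int := X x k.+2 6 + (nat_of_bool (k.+1 == m)%N)%:Z * (nat_of_bool P)%:Z.
Definition pA m (x : asg m) k : int := X x k.+2 iA.
Definition Env n m (P : bool) (x : asg m) j (req : int) :=
  forall y : asg m, agree x y j -> X y j 8 = req ->
  forall k i, (j <= k)%N -> (k < m)%N -> (i < 8)%N -> ~~ impn n P y (k, i).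
Definition INV m (x s : asg m) t S (cz : bool) :=
  [/\ agree x s t.+1, blk s t S &
      (0 < t)%N -> if cz then zb s t else (blk s t.-1 bS /\ zb s t.-1)].
Definition uniqn n m (P : bool) (x : asg m) (p : nat * nat) :=
  [/\ (p.1 < m)%N, (p.2 < 8)%N &
      forall k i, (k < m)%N -> (i < 8)%N -> impn n P x (k, i) = (k == p.1) && (i == p.2)].
Fixpoint good n m (P : bool) (x : asg m) (ms : seq (nat * nat)) : Prop :=
  match ms with
  | [::] => True
  | p :: ms' => uniqn n P x p /\ good n P (flipn x p) ms'
  end.
Definition goodK n m (P : bool) (x : asg m) ms (Q : asg m -> Prop) :=
  good n P x ms /\ Q (foldl (@flipn m) x ms).

Lemma goodK_nil n m P (x : asg m) (Q : asg m -> Prop) : Q x -> goodK n P x [::] Q.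
Proof. by []. Qed.

Lemma goodK_cons n m P (x : asg m) p ms Q :
  uniqn n P x p -> goodK n P (flipn x p) ms Q -> goodK n P x (p :: ms) Q.
Proof. by move=> h [h1 h2]. Qed.

Lemma goodK_cat n m P (x : asg m) ms1 ms2 Q :
  goodK n P x ms1 (fun y => goodK n P y ms2 Q) -> goodK n P x (ms1 ++ ms2) Q.
Proof.
elim: ms1 x => [|p ms1 IH] x /=; first by case=> _ [].
case=> [[hu hg] hq]; split; first split => //.
- by have [] := IH (flipn x p) (conj hg hq).
- by have [] := IH (flipn x p) (conj hg hq).
Qed.

Lemma impn_eq n m P (x : asg m) k i : (k < m)%N -> (i < 8)%N ->
  impn n P x (k, i) =
  (0 < Dloc (k == 0)%N (Mk n k.+1) (sk n k.+1) (fun j => X x k.+1 j.+1) (p6 P x k) (pA x k) (X x k 1) (X x k iB) i).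
Proof. by move=> hk hi; rewrite /impn -subr_gt0 fit_flip. Qed.

Lemma Dloc_ext f M s b b' p6v pAv c1 cB i : (forall j, (j < 8)%N -> b j = b' j) -> (i < 8)%N ->
  Dloc f M s b p6v pAv c1 cB i = Dloc f M s b' p6v pAv c1 cB i.
Proof.
move=> h hi; rewrite /Dloc (@Gf_ext _ _ (upd b i) (upd b' i)); last by move=> j hj; rewrite /upd !h.
rewrite (Gf_ext _ _ h) h //; congr (_ + (_ * _)).
by rewrite /coup; case: i hi => [|[|[|[|[|[|[|[|i]]]]]]]] //= _; rewrite ?h.
Qed.

Lemma params n k : (k < n)%N ->
  [/\ 0 <= sk n k.+1, sk n k.+1 + 8 <= Mk n k.+1 & (k == 0)%N -> Mk n k.+1 = sk n k.+1 + 8].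
Proof.
move=> hk; rewrite /Mk /sk /=.
have e := expn_gt0 2 k; set E := (2 ^ k)%N in e *.
split.
- lia.
- have : ((E : int) * (8 * n + 16)%:Z >= (8 * n + 16)%:Z). 
    by rewrite ler_peMl //; lia.
  lia.
- move/eqP => k0; rewrite /E k0 expn0 mul1r; lia.
Qed.

Lemma X_flip_other m (x : asg m) t i k j : (t < m)%N -> (i < 8)%N -> k != t ->
  X (flipn x (t, i)) k.+1 j = X x k.+1 j.
Proof. by move=> ht hi hk; rewrite X_flipn //= (negbTE hk). Qed.

Lemma X_flip_same m (x : asg m) t i j : (t < m)%N -> (i < 8)%N ->
  X (flipn x (t, i)) t.+1 j.+1 = if j == i then 1 - X x t.+1 j.+1 else X x t.+1 j.+1.
Proof. by move=> ht hi; rewrite X_flipn //= eqxx. Qed.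

Definition flipchk (S S' : seq nat) (i : nat) : bool :=
  all (fun j => st S' j == if j == i then 1 - st S j else st S j) (iota 0 8).

Lemma INV_flip m (x s : asg m) t S S' cz i : (t < m)%N -> (i < 8)%N -> flipchk S S' i ->
  INV x s t S cz -> INV x (flipn s (t, i)) t S' cz.
Proof.
move=> ht hi /allP hc [ha hb hch]; split.
- move=> k j hk; rewrite ha // X_flip_other //; lia.
- move=> j hj; rewrite X_flip_same //.
  have := hc j; rewrite mem_iota add0n hj => /(_ isT) /eqP ->.
  by rewrite hb.
- move=> t0; move: (hch t0); case: cz {hch} => [hz|[hbb hz]].
    by move=> k j hk hj; rewrite X_flip_other ?hz //; lia.
  split; last by move=> k j hk hj; rewrite X_flip_other ?hz //; lia.
  by move=> j hj; rewrite X_flip_other ?hbb //; lia.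
Qed.

Lemma st_zS j : st zS j = 0.
Proof. by rewrite /st /zS; do 8! (case: j => [//|j]); case: j. Qed.

Lemma Xpred m (x : asg m) t i : (0 < t)%N -> X x t i.+1 = X x t.-1.+1 i.+1.
Proof. by move=> h; rewrite prednK. Qed.

Lemma rest_zero n m P (x : asg m) j : (m <= n)%N -> (j <= m)%N -> zb x j ->
  ((0 < j)%N -> p6 P x j.-1 = 0) ->
  forall k i, (k < j)%N -> (i < 8)%N -> ~~ impn n P x (k, i).
Proof.
move=> hmn hjm hz hp k i hk hi.
have hkm : (k < m)%N by lia.
rewrite impn_eq // (@Dloc_ext _ _ _ _ (st zS)) //; last by move=> jj hjj; rewrite hz // st_zS.
have p6k : p6 P x k = 0.
  case: (ltnP k.+1 j) => h.
    rewrite /p6 (hz k.+1 5) // (_ : (k.+1 == m) = false) /=; last by lia.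
    by rewrite mul0r addr0.
  have e : k = j.-1 by lia.
  by rewrite e hp //; lia.
rewrite p6k -leNgt.
have [h1 h2 h3] := @params n k (ltac:(lia)).
apply: (RZ h1 h2 h3 (X01 x k.+2 iA)) => //.
move=> kn0; have [k' ek] : exists k', k = k'.+1 by case: k kn0 {hk hkm p6k h1 h2 h3} => // k' _; exists k'.
rewrite ek /iB; split; apply: hz; lia.
Qed.

Lemma rest_b n m P (x : asg m) j : (m <= n)%N -> (j <= m)%N -> (0 < j)%N ->
  blk x j.-1 bS -> zb x j.-1 -> p6 P x j.-1 = 1 ->
  forall k i, (k < j)%N -> (i < 8)%N -> ~~ impn n P x (k, i).
Proof.
case: j => [//|j] /= hmn hjm _ hb hz hp k i hk hi.
case: (ltngtP k j) => hkj.
- apply: (rest_zero (j := j)) => //; first by lia.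
  move=> j0; rewrite /p6 (prednK j0) (hb 5) // (_ : (j == m) = false) /=; last by lia.
  by rewrite mul0r addr0.
- lia.
- subst k.
  have hkm : (j < m)%N by lia.
  rewrite impn_eq // (@Dloc_ext _ _ _ _ (st bS) _ _ _ _ _ hb hi).
  rewrite hp -leNgt.
  have [h1 h2 h3] := @params n j (ltac:(lia)).
  apply: (RB h1 h2 h3 (X01 x j.+2 iA)) => //.
  move=> jn0; have j0 : (0 < j)%N by rewrite lt0n.
  rewrite /iB (Xpred x 0 j0) (Xpred x 7 j0); split; apply: hz; lia.
Qed.

Lemma st_step n m P (x s : asg m) t S tgt (cz : bool) (req p6v : int) (pAc : int -> Prop) :
  (t < m)%N -> (m <= n)%N -> (tgt < 8)%N ->
  INV x s t S cz -> Env n P x t.+1 req -> st S 7 = req -> st S 5 = (if cz then 0 else 1) ->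
  p6 P x t = p6v -> pAc (pA x t) ->
  (forall (first : bool) (M s' pA' c1 cB : int), 0 <= s' -> s' + 8 <= M -> (first -> M = s' + 8) -> pAc pA' ->
     (~~ first -> c1 = (if cz then 0 else 1) /\ cB = (if cz then 0 else 1)) ->
     forall i, (i < 8)%N -> (0 < Dloc first M s' (st S) p6v pA' c1 cB i) = (i == tgt)) ->
  uniqn n P s (t, tgt).
Proof.
move=> ht hmn htg [ha hb hch] hE h7 h5 hp6 hpA L.
split => // k i hk hi /=.
have p6s : p6 P s t = p6v by rewrite -hp6 /p6 ha.
have pAs : pA s t = pA x t by rewrite /pA ha.
case: (ltngtP k t) => hkt /=.
-   apply/negbTE; move: h5 L hch; case: cz => h5 L hch.
  + have t0 : (0 < t)%N by lia.
    apply: (rest_zero (j := t)) => //; [lia | exact: hch t0 | ].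
    move=> _; rewrite /p6 (prednK t0) (hb 5) // h5 (_ : (t == m) = false) /=; last by lia.
    by rewrite mul0r addr0.
  + have t0 : (0 < t)%N by lia.
    have [hbb hz] := hch t0.
    apply: (rest_b (j := t)) => //; first by lia.
    rewrite /p6 (prednK t0) (hb 5) // h5 (_ : (t == m) = false) /=; last by lia.
    by rewrite mul0r addr0.
-   apply/negbTE; apply: hE => //; by rewrite (hb 7).
- subst k; rewrite ?eqxx /= impn_eq // (@Dloc_ext _ _ _ _ (st S) _ _ _ _ _ hb hi).
  rewrite p6s pAs.
  have [h1 h2 h3] := @params n t (ltac:(lia)).
  apply: L => //.
  move=> tn0; have t0 : (0 < t)%N by rewrite lt0n.
  rewrite /iB (Xpred s 0 t0) (Xpred s 7 t0).
  move: (hch t0); case: cz {h5 hch} => [hz|[hbb hz]].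
    by split; apply: hz; lia.
  by rewrite !hbb.
Qed.

Lemma env_sub n m P (x s : asg m) t W (req' req p6v : int) (pAc : int -> Prop) :
  (0 < t)%N -> (t < m)%N -> (m <= n)%N -> Env n P x t.+1 req' -> st W 7 = req' -> agree x s t.+1 -> blk s t W ->
  p6 P x t = p6v -> pAc (pA x t) ->
  (forall (M s' pA' c1 : int), 0 <= s' -> s' + 8 <= M -> pAc pA' -> (c1 = 0 \/ c1 = 1) ->
     forall i, (i < 8)%N -> Dloc false M s' (st W) p6v pA' c1 req i <= 0) ->
  Env n P s t req.
Proof.
move=> t0 ht hmn hE h7 ha hb hp6 hpA L y hsy hyB k i hk hkm hi.
case: (ltngtP t k) => htk.
- apply: hE => //.
  + by move=> k' i' hk'; rewrite ha // hsy //; lia.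
  + by rewrite -hsy // hb.
- lia.
- subst k.
  rewrite impn_eq // (_ : (t == 0)%N = false); last by lia.
  rewrite (@Dloc_ext _ _ _ _ (st W)) //; last by move=> jj hjj; rewrite -hsy // hb.
  have -> : p6 P y t = p6v by rewrite -hp6 /p6 -hsy // -ha.
  have -> : pA y t = pA x t by rewrite /pA -hsy // -ha.
  have -> : X y t iB = req by [].
  have [h1 h2 h3] := @params n t (ltac:(lia)).
  by rewrite -leNgt; apply: L => //; apply: X01.
Qed.

Fixpoint runs (t : nat) : seq (nat * nat) * seq (nat * nat) :=
  match t with
  | 0%N => ([::], [::])
  | t'.+1 =>
    ([:: (t', 0%N); (t', 1%N); (t', 2%N); (t', 5%N)] ++ (runs t').1 ++
     [:: (t', 6%N); (t', 3%N); (t', 4%N); (t', 5%N)] ++ (runs t').2 ++ [:: (t', 6%N); (t', 7%N)],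
     [:: (t', 0%N); (t', 3%N); (t', 4%N); (t', 5%N)] ++ (runs t').1 ++
     [:: (t', 6%N); (t', 1%N); (t', 2%N); (t', 5%N)] ++ (runs t').2 ++ [:: (t', 6%N); (t', 7%N)])
  end.

Lemma stepK n m P (x s : asg m) t S S' tgt (cz : bool) (req p6v : int) (pAc : int -> Prop) rest Q :
  (t < m)%N -> (m <= n)%N -> (tgt < 8)%N -> flipchk S S' tgt ->
  INV x s t S cz -> Env n P x t.+1 req -> st S 7 = req -> st S 5 = (if cz then 0 else 1) ->
  p6 P x t = p6v -> pAc (pA x t) ->
  (forall (first : bool) (M s' pA' c1 cB : int), 0 <= s' -> s' + 8 <= M -> (first -> M = s' + 8) -> pAc pA' ->
     (~~ first -> c1 = (if cz then 0 else 1) /\ cB = (if cz then 0 else 1)) ->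
     forall i, (i < 8)%N -> (0 < Dloc first M s' (st S) p6v pA' c1 cB i) = (i == tgt)) ->
  (forall s', INV x s' t S' cz -> goodK n P s' rest Q) ->
  goodK n P s ((t, tgt) :: rest) Q.
Proof.
move=> ht hmn htg hc I hE h7 h5 hp6 hpA L K.
apply: goodK_cons; first exact: (st_step ht hmn htg I hE h7 h5 hp6 hpA L).
apply: K. exact: (INV_flip ht htg hc I).
Qed.

Lemma sub_up n m P (x s : asg m) t W (p6v : int) (pAc : int -> Prop) (Q : asg m -> Prop) :
  (t < m)%N -> (m <= n)%N ->
  ((0 < t)%N -> forall z : asg m, zb z t -> p6 P z t.-1 = 1 -> pA z t.-1 = 0 -> Env n P z t 0 ->
      goodK n P z (runs t).1 (fun y => agree z y t /\ blk y t.-1 bS /\ zb y t.-1)) ->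
  INV x s t W true -> st W 5 = 1 -> st W 6 = 0 -> Env n P x t.+1 (st W 7) ->
  p6 P x t = p6v -> pAc (pA x t) ->
  (forall (M s' pA' c1 : int), 0 <= s' -> s' + 8 <= M -> pAc pA' -> (c1 = 0 \/ c1 = 1) ->
     forall i, (i < 8)%N -> Dloc false M s' (st W) p6v pA' c1 0 i <= 0) ->
  (forall y, INV x y t W false -> Q y) -> goodK n P s (runs t).1 Q.
Proof.
move=> ht hmn IH [ha hb hch] h5 h6 hE hp6 hpA L HQ.
case: (posnP t) => [t0|t0].
  subst t; apply: goodK_nil; apply: HQ; by split.
have hs6 : p6 P s t.-1 = 1.
  rewrite /p6 (prednK t0) (hb 5) // h5 (_ : (t == m) = false) /=; last by lia.
  by rewrite mul0r addr0.
have hsA : pA s t.-1 = 0 by rewrite /pA (prednK t0) (hb 6).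
have hEs : Env n P s t 0 by apply: (env_sub t0 ht hmn hE erefl ha hb hp6 hpA L).
have [hg [hf1 [hf2 hf3]]] := IH t0 s (hch t0) hs6 hsA hEs.
split => //; apply: HQ; split.
- by move=> k i hk; rewrite ha // hf1 //; lia.
- by move=> j hj; rewrite -hf1 // hb.
- by move=> _.
Qed.

Lemma sub_down n m P (x s : asg m) t W (p6v : int) (pAc : int -> Prop) (Q : asg m -> Prop) :
  (t < m)%N -> (m <= n)%N ->
  ((0 < t)%N -> forall z : asg m, blk z t.-1 bS -> zb z t.-1 -> p6 P z t.-1 = 0 -> Env n P z t 1 ->
      goodK n P z (runs t).2 (fun y => agree z y t /\ zb y t)) ->
  INV x s t W false -> st W 5 = 0 -> Env n P x t.+1 (st W 7) ->
  p6 P x t = p6v -> pAc (pA x t) ->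
  (forall (M s' pA' c1 : int), 0 <= s' -> s' + 8 <= M -> pAc pA' -> (c1 = 0 \/ c1 = 1) ->
     forall i, (i < 8)%N -> Dloc false M s' (st W) p6v pA' c1 1 i <= 0) ->
  (forall y, INV x y t W true -> Q y) -> goodK n P s (runs t).2 Q.
Proof.
move=> ht hmn IH [ha hb hch] h5 hE hp6 hpA L HQ.
case: (posnP t) => [t0|t0].
  subst t; apply: goodK_nil; apply: HQ; by split.
have hs6 : p6 P s t.-1 = 0.
  rewrite /p6 (prednK t0) (hb 5) // h5 (_ : (t == m) = false) /=; last by lia.
  by rewrite mul0r addr0.
have hEs : Env n P s t 1 by apply: (env_sub t0 ht hmn hE erefl ha hb hp6 hpA L).
have [hbb hz] := hch t0.
have [hg [hf1 hf2]] := IH t0 s hbb hz hs6 hEs.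
split => //; apply: HQ; split.
- by move=> k i hk; rewrite ha // hf1 //; lia.
- by move=> j hj; rewrite -hf1 // hb.
- by move=> _.
Qed.

Lemma run_ok n m P j : (j <= m)%N -> (m <= n)%N ->
  ((0 < j)%N -> forall z : asg m, zb z j -> p6 P z j.-1 = 1 -> pA z j.-1 = 0 -> Env n P z j 0 ->
      goodK n P z (runs j).1 (fun y => agree z y j /\ blk y j.-1 bS /\ zb y j.-1)) /\
  ((0 < j)%N -> forall z : asg m, blk z j.-1 bS -> zb z j.-1 -> p6 P z j.-1 = 0 -> Env n P z j 1 ->
      goodK n P z (runs j).2 (fun y => agree z y j /\ zb y j)).
Proof.
elim: j => [|t IH] hjm hmn; first by split.
have [IHu IHd] := IH (ltnW hjm) hmn.
have ht : (t < m)%N := hjm.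
split => _ z /=.
- move=> hz hp6 hpA hE.
  have I : INV z z t zS true.
    split => //.
    + by move=> j hj; rewrite hz // st_zS.
    + by move=> _ k i hk hi; apply: hz; lia.
  apply: (@stepK n m P z _ t [:: 0; 0; 0; 0; 0; 0; 0; 0]%N [:: 1; 0; 0; 0; 0; 0; 0; 0]%N 0%N true _ _ (fun a => a = 0) _ _ ht hmn isT isT I hE erefl erefl hp6 hpA (@LU0)).
  clear I; move=> s1 I.
  apply: (@stepK n m P z _ t [:: 1; 0; 0; 0; 0; 0; 0; 0]%N [:: 1; 1; 0; 0; 0; 0; 0; 0]%N 1%N true _ _ (fun a => a = 0) _ _ ht hmn isT isT I hE erefl erefl hp6 hpA (@LU1)).
  clear I; move=> s2 I.
  apply: (@stepK n m P z _ t [:: 1; 1; 0; 0; 0; 0; 0; 0]%N [:: 1; 1; 1; 0; 0; 0; 0; 0]%N 2%N true _ _ (fun a => a = 0) _ _ ht hmn isT isT I hE erefl erefl hp6 hpA (@LU2)).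
  clear I; move=> s3 I.
  apply: (@stepK n m P z _ t [:: 1; 1; 1; 0; 0; 0; 0; 0]%N [:: 1; 1; 1; 0; 0; 1; 0; 0]%N 5%N true _ _ (fun a => a = 0) _ _ ht hmn isT isT I hE erefl erefl hp6 hpA (@LU3)).
  clear I; move=> s4 I.
  apply: goodK_cat.
  apply: (@sub_up n m P z _ t [:: 1; 1; 1; 0; 0; 1; 0; 0]%N _ (fun a => a = 0) _ ht hmn IHu I erefl erefl hE hp6 hpA (@WU1)).
  clear I; move=> s5 I.
  apply: (@stepK n m P z _ t [:: 1; 1; 1; 0; 0; 1; 0; 0]%N [:: 1; 1; 1; 0; 0; 1; 1; 0]%N 6%N false _ _ (fun a => a = 0) _ _ ht hmn isT isT I hE erefl erefl hp6 hpA (@LU4)).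
  clear I; move=> s6 I.
  apply: (@stepK n m P z _ t [:: 1; 1; 1; 0; 0; 1; 1; 0]%N [:: 1; 1; 1; 1; 0; 1; 1; 0]%N 3%N false _ _ (fun a => a = 0) _ _ ht hmn isT isT I hE erefl erefl hp6 hpA (@LU5)).
  clear I; move=> s7 I.
  apply: (@stepK n m P z _ t [:: 1; 1; 1; 1; 0; 1; 1; 0]%N [:: 1; 1; 1; 1; 1; 1; 1; 0]%N 4%N false _ _ (fun a => a = 0) _ _ ht hmn isT isT I hE erefl erefl hp6 hpA (@LU6)).
  clear I; move=> s8 I.
  apply: (@stepK n m P z _ t [:: 1; 1; 1; 1; 1; 1; 1; 0]%N [:: 1; 1; 1; 1; 1; 0; 1; 0]%N 5%N false _ _ (fun a => a = 0) _ _ ht hmn isT isT I hE erefl erefl hp6 hpA (@LU7)).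
  clear I; move=> s9 I.
  apply: goodK_cat.
  apply: (@sub_down n m P z _ t [:: 1; 1; 1; 1; 1; 0; 1; 0]%N _ (fun a => a = 0) _ ht hmn IHd I erefl hE hp6 hpA (@WU2)).
  clear I; move=> s10 I.
  apply: (@stepK n m P z _ t [:: 1; 1; 1; 1; 1; 0; 1; 0]%N [:: 1; 1; 1; 1; 1; 0; 0; 0]%N 6%N true _ _ (fun a => a = 0) _ _ ht hmn isT isT I hE erefl erefl hp6 hpA (@LU8)).
  clear I; move=> s11 I.
  apply: (@stepK n m P z _ t [:: 1; 1; 1; 1; 1; 0; 0; 0]%N [:: 1; 1; 1; 1; 1; 0; 0; 1]%N 7%N true _ _ (fun a => a = 0) _ _ ht hmn isT isT I hE erefl erefl hp6 hpA (@LU9)).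
  clear I; move=> s12 I.
  apply: goodK_nil; case: I => ha hb hch; split => //; split => //.
  by case: (posnP t) => [->|t0]; [move=> k i; rewrite ltn0 | exact: hch].
- move=> hb hz hp6 hE.
  have hpA := X01 z t.+2 iA.
  have I : INV z z t bS true by split.
  apply: (@stepK n m P z _ t [:: 1; 1; 1; 1; 1; 0; 0; 1]%N [:: 0; 1; 1; 1; 1; 0; 0; 1]%N 0%N true _ _ (fun a => a = 0 \/ a = 1) _ _ ht hmn isT isT I hE erefl erefl hp6 hpA (@LD0)).
  clear I; move=> s13 I.
  apply: (@stepK n m P z _ t [:: 0; 1; 1; 1; 1; 0; 0; 1]%N [:: 0; 1; 1; 0; 1; 0; 0; 1]%N 3%N true _ _ (fun a => a = 0 \/ a = 1) _ _ ht hmn isT isT I hE erefl erefl hp6 hpA (@LD1)).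
  clear I; move=> s14 I.
  apply: (@stepK n m P z _ t [:: 0; 1; 1; 0; 1; 0; 0; 1]%N [:: 0; 1; 1; 0; 0; 0; 0; 1]%N 4%N true _ _ (fun a => a = 0 \/ a = 1) _ _ ht hmn isT isT I hE erefl erefl hp6 hpA (@LD2)).
  clear I; move=> s15 I.
  apply: (@stepK n m P z _ t [:: 0; 1; 1; 0; 0; 0; 0; 1]%N [:: 0; 1; 1; 0; 0; 1; 0; 1]%N 5%N true _ _ (fun a => a = 0 \/ a = 1) _ _ ht hmn isT isT I hE erefl erefl hp6 hpA (@LD3)).
  clear I; move=> s16 I.
  apply: goodK_cat.
  apply: (@sub_up n m P z _ t [:: 0; 1; 1; 0; 0; 1; 0; 1]%N _ (fun a => a = 0 \/ a = 1) _ ht hmn IHu I erefl erefl hE hp6 hpA (@WD1)).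
  clear I; move=> s17 I.
  apply: (@stepK n m P z _ t [:: 0; 1; 1; 0; 0; 1; 0; 1]%N [:: 0; 1; 1; 0; 0; 1; 1; 1]%N 6%N false _ _ (fun a => a = 0 \/ a = 1) _ _ ht hmn isT isT I hE erefl erefl hp6 hpA (@LD4)).
  clear I; move=> s18 I.
  apply: (@stepK n m P z _ t [:: 0; 1; 1; 0; 0; 1; 1; 1]%N [:: 0; 0; 1; 0; 0; 1; 1; 1]%N 1%N false _ _ (fun a => a = 0 \/ a = 1) _ _ ht hmn isT isT I hE erefl erefl hp6 hpA (@LD5)).
  clear I; move=> s19 I.
  apply: (@stepK n m P z _ t [:: 0; 0; 1; 0; 0; 1; 1; 1]%N [:: 0; 0; 0; 0; 0; 1; 1; 1]%N 2%N false _ _ (fun a => a = 0 \/ a = 1) _ _ ht hmn isT isT I hE erefl erefl hp6 hpA (@LD6)).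
  clear I; move=> s20 I.
  apply: (@stepK n m P z _ t [:: 0; 0; 0; 0; 0; 1; 1; 1]%N [:: 0; 0; 0; 0; 0; 0; 1; 1]%N 5%N false _ _ (fun a => a = 0 \/ a = 1) _ _ ht hmn isT isT I hE erefl erefl hp6 hpA (@LD7)).
  clear I; move=> s21 I.
  apply: goodK_cat.
  apply: (@sub_down n m P z _ t [:: 0; 0; 0; 0; 0; 0; 1; 1]%N _ (fun a => a = 0 \/ a = 1) _ ht hmn IHd I erefl hE hp6 hpA (@WD2)).
  clear I; move=> s22 I.
  apply: (@stepK n m P z _ t [:: 0; 0; 0; 0; 0; 0; 1; 1]%N [:: 0; 0; 0; 0; 0; 0; 0; 1]%N 6%N true _ _ (fun a => a = 0 \/ a = 1) _ _ ht hmn isT isT I hE erefl erefl hp6 hpA (@LD8)).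
  clear I; move=> s23 I.
  apply: (@stepK n m P z _ t [:: 0; 0; 0; 0; 0; 0; 0; 1]%N [:: 0; 0; 0; 0; 0; 0; 0; 0]%N 7%N true _ _ (fun a => a = 0 \/ a = 1) _ _ ht hmn isT isT I hE erefl erefl hp6 hpA (@LD9)).
  clear I; move=> s24 I.
  apply: goodK_nil; case: I => ha hb' hch; split => //.
  move=> k i hk hi; case: (ltngtP k t) => hkt.
  - by have := hch (leq_ltn_trans (leq0n k) hkt); apply.
  - lia.
  - by subst k; rewrite hb' // st_zS.
Qed.

Lemma size_runs j : size (runs j).1 = (10 * (2 ^ j - 1))%N /\ size (runs j).2 = (10 * (2 ^ j - 1))%N.
Proof.
elim: j => [|j [IH1 IH2]] //=.
rewrite !size_cat /= !size_cat IH1 IH2 /= expnS.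
have := expn_gt0 2 j; split; lia.
Qed.

Lemma pair_eqn m (w v : 'I_m * 'I_8) : (((w.1 : nat) == v.1) && ((w.2 : nat) == v.2)) = (w == v).
Proof. by case: w v => [a b] [c d]. Qed.

Lemma adj_flip m (x : asg m) (v : 'I_m * 'I_8) : adjacent x (flipn x (val v.1, val v.2)).
Proof.
rewrite /adjacent (_ : [set w | x w != flipn x (val v.1, val v.2) w] = [set v]) ?cards1 //.
apply/setP => w; rewrite !inE ffunE /= pair_eqn.
by case: (w == v); case: (x w).
Qed.

Lemma adj_inv m (x y : asg m) : adjacent x y -> exists v : 'I_m * 'I_8, y = flipn x (val v.1, val v.2).
Proof.
move/cards1P => [v hv]; exists v; apply/ffunP => w; rewrite ffunE /= pair_eqn.
move/setP: hv => /(_ w); rewrite !inE => e.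
by case: (w == v) e; case: (x w); case: (y w).
Qed.

Lemma last_scanl m (x : asg m) ms : last x (scanl (@flipn m) x ms) = foldl (@flipn m) x ms.
Proof. by elim: ms x => //= p ms IH x; rewrite IH. Qed.

Lemma good_path n m P (x : asg m) ms : good n P x ms -> path (ascent_step (fit n P)) x (scanl (@flipn m) x ms).
Proof.
elim: ms x => [|p ms IH] x //=; case: p => a b [[/= h1 h2 hu] hg].
rewrite IH // andbT; apply/andP; split.
  exact: (adj_flip x (Ordinal h1, Ordinal h2)).
by have := hu a b h1 h2; rewrite !eqxx /impn => ->.
Qed.

Lemma peak_of n m P (x : asg m) : (forall k i, (k < m)%N -> (i < 8)%N -> ~~ impn n P x (k, i)) ->
  local_peak (fit n P) x.
Proof.
move=> h y /adj_inv [v ->].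
by have := h _ _ (ltn_ord v.1) (ltn_ord v.2); rewrite /impn -leNgt.
Qed.

Lemma uniq_asc n m P (x : asg m) ms : good n P x ms ->
  (forall k i, (k < m)%N -> (i < 8)%N -> ~~ impn n P (foldl (@flipn m) x ms) (k, i)) ->
  forall q, ascent (fit n P) x q -> q = scanl (@flipn m) x ms.
Proof.
elim: ms x => [|p ms IH] x /= hg hpk [|y q] [hpath hpeak] //=.
- case/andP: hpath => /andP [/adj_inv [v ev] hlt] _.
  have := hpk _ _ (ltn_ord v.1) (ltn_ord v.2).
  by rewrite /impn -ev hlt.
- case: p hg hpk => a b [[/= h1 h2 hu] hg] hpk.
  have := hpeak (flipn x (a, b)) (adj_flip x (Ordinal h1, Ordinal h2)).
  by have := hu a b h1 h2; rewrite !eqxx /impn leNgt => ->.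
- case: p hg hpk => a b [[/= h1 h2 hu] hg] hpk.
  case/andP: hpath => /andP [/adj_inv [v ev] hlt] hpath.
  have := hu _ _ (ltn_ord v.1) (ltn_ord v.2); rewrite /impn -ev hlt => /esym /andP [/eqP e1 /eqP e2].
  have ey : y = flipn x (a, b) by rewrite ev -e1 -e2.
  rewrite ey in hpath hpeak *.
  congr (_ :: _); apply: (IH (flipn x (a, b)) hg hpk).
  by split.
Qed.

Lemma asg_eq m (x y : asg m) : (forall k i, (k < m)%N -> (i < 8)%N -> X x k.+1 i.+1 = X y k.+1 i.+1) -> x = y.
Proof.
move=> h; apply/ffunP => [[a b]].
have := h a b (ltn_ord a) (ltn_ord b); rewrite /X /= !valK.
by case: (x (a, b)); case: (y (a, b)).
Qed.

Lemma Xa m k i : X (asg_a m) k.+1 i.+1 = 0.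
Proof. by rewrite /X /=; case: insub => // a; case: insub => // b; rewrite ffunE. Qed.

Lemma Xb m k i : (k < m)%N -> (i < 8)%N -> X (asg_b m) k.+1 i.+1 = if k == m.-1 then st bS i else 0.
Proof.
move=> hk hi; rewrite /X /= (insubT (fun j => j < m)%N hk) (insubT (fun j => j < 8)%N hi) ffunE /=.
case: (k == m.-1) => //=.
by case: i hi => [|[|[|[|[|[|[|[|i]]]]]]]].
Qed.

Unset Implicit Arguments.

Theorem theorem4p1 (n m : nat) (hn : (1 <= n)%N) (hm1 : (1 <= m)%N) (hmn : (m <= n)%N) :
  (exists p : seq (asg m),
      [/\ ascent (fit n true) (asg_a m) p,
          (forall q, ascent (fit n true) (asg_a m) q -> q = p),
          last (asg_a m) p = asg_b m &
          size p = (10 * (2 ^ m - 1))%N])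
  /\
  (exists p : seq (asg m),
      [/\ ascent (fit n false) (asg_b m) p,
          (forall q, ascent (fit n false) (asg_b m) q -> q = p),
          last (asg_b m) p = asg_a m &
          size p = (10 * (2 ^ m - 1))%N]).
Proof.
have hm0 : (0 < m)%N := hm1.
split.
- have [RU _] := @run_ok n m true m (leqnn m) hmn.
  have hz : zb (asg_a m) m by move=> k i _ _; exact: Xa.
  have hp6 : p6 true (asg_a m) m.-1 = 1 by rewrite /p6 (prednK hm0) Xa eqxx /= add0r mul1r.
  have hpA : pA (asg_a m) m.-1 = 0 by rewrite /pA Xa.
  have hE : Env n true (asg_a m) m 0 by move=> y _ _ k i hk hkm; lia.
  have [hg [hf1 [hf2 hf3]]] := RU hm0 (asg_a m) hz hp6 hpA hE.
  have hy : foldl (@flipn m) (asg_a m) (runs m).1 = asg_b m.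
    apply: asg_eq => k i hk hi; rewrite Xb //.
    case: (eqVneq k m.-1) => [->|ne]; first by rewrite hf2.
    by rewrite hf3 //; lia.
  have hpk : forall k i, (k < m)%N -> (i < 8)%N ->
      ~~ impn n true (foldl (@flipn m) (asg_a m) (runs m).1) (k, i).
    apply: (rest_b (j := m)) => //.
    by rewrite /p6 (prednK hm0) X_out // eqxx /= add0r mul1r.
  exists (scanl (@flipn m) (asg_a m) (runs m).1); split.
  + split; first exact: good_path.
    by rewrite last_scanl; exact: peak_of.
  + exact: uniq_asc.
  + by rewrite last_scanl.
  + by rewrite size_scanl (size_runs m).1.
- have [_ RD] := @run_ok n m false m (leqnn m) hmn.
  have hb : blk (asg_b m) m.-1 bS.
    by move=> j hj; rewrite Xb ?eqxx //; lia.
  have hz : zb (asg_b m) m.-1.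
    move=> k i hk hi; rewrite Xb //; last by lia.
    by rewrite (_ : (k == m.-1) = false) //; lia.
  have hp6 : p6 false (asg_b m) m.-1 = 0 by rewrite /p6 (prednK hm0) X_out // eqxx /= add0r mulr0.
  have hE : Env n false (asg_b m) m 1 by move=> y _ _ k i hk hkm; lia.
  have [hg [hf1 hf2]] := RD hm0 (asg_b m) hb hz hp6 hE.
  have hy : foldl (@flipn m) (asg_b m) (runs m).2 = asg_a m.
    by apply: asg_eq => k i hk hi; rewrite Xa hf2.
  have hpk : forall k i, (k < m)%N -> (i < 8)%N ->
      ~~ impn n false (foldl (@flipn m) (asg_b m) (runs m).2) (k, i).
    apply: (rest_zero (j := m)) => //.
    by move=> _; rewrite /p6 (prednK hm0) X_out // eqxx /= add0r mulr0.
  exists (scanl (@flipn m) (asg_b m) (runs m).2); split.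
  + split; first exact: good_path.
    by rewrite last_scanl; exact: peak_of.
  + exact: uniq_asc.
  + by rewrite last_scanl.
  + by rewrite size_scanl (size_runs m).2.
Qed.
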